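(* There exist absolute constants $C,c>0$ such that the following holds. Let $G=\mathrm{SL}(2,q)$ and let $D=(D_1,D_2)$ be a distribution on $G^2$ such that $D_1$ and $D_2$ are each uniform on $G$. Then with probability at least $1-C/q$ over $(g,h)$ sampled from $D$: (1) for every conjugacy class $S$ of $G$, $\Pr[g\,\mathbf C(h)\in S]\le C/q$; and (2) the distribution of $\mathbf C(g)\mathbf C(h)$ is within statistical distance $Cq^{-c}$ of the uniform distribution on $G$.
   Context: For $x\in G$, $\mathbf C(x)$ denotes $u^{-1}xu$ with $u$ uniform in $G$; distinct occurrences use independent $u$. Statistical distance is half the $\ell_1$ distance. $\mathrm{SL}(2,q)$ is the group of $2\times2$ determinant-one matrices over $\mathbb F_q$. *)

(* Defs.v *)
From HB Require Import structures.
From mathcomp Require Import all_boot all_order all_algebra all_fingroup.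
Set Implicit Arguments. Unset Strict Implicit. Unset Printing Implicit Defensive.
Import Order.TTheory GRing.Theory Num.Theory.

Local Open Scope group_scope.

Definition SL2 (F : finFieldType) : {set {'GL_2[F]}} :=
  [set x : {'GL_2[F]} | (\det (GLval x) == 1)%R].

Section Probs.
Variables (F : finFieldType) (R : realFieldType).
Local Notation gT := {'GL_2[F]}.
Local Notation G := (SL2 F).

(* D is a probability distribution on gT * gT whose two marginals are
   uniform on G (hence D is supported on G x G). *)
Definition is_distr (D : gT * gT -> R) : Prop :=
  (forall p, (0 <= D p)%R) /\ (\sum_p D p = 1)%R.
Definition marginals_uniform (D : gT * gT -> R) : Prop :=
  (forall x, \sum_y D (x, y) = (x \in G)%:R / #|G|%:R)%R /\
  (forall y, \sum_x D (x, y) = (y \in G)%:R / #|G|%:R)%R.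

Definition probC (g h : gT) (S : {set gT}) : R :=
  (#|[set u in G | (g * h ^ u)%g \in S]|%:R / #|G|%:R)%R.

Definition CCprob (g h z : gT) : R :=
  (#|[set uv in setX G G | ((g ^ uv.1) * (h ^ uv.2))%g == z]|%:R / (#|G| ^ 2)%:R)%R.

(* statistical distance (half l1) between law of C(g)C(h) and uniform on G;
   for g, h in G the law is supported on G. *)
Definition sdist_unif (g h : gT) : R :=
  (2^-1 * \sum_(z in G) `|CCprob g h z - #|G|%:R^-1|)%R.
End Probs.

(* Main.v *)
Require Import Defs.
From HB Require Import structures.
From mathcomp Require Import all_boot all_order all_algebra all_fingroup.
From mathcomp Require Import ring lra zify.
Import Order.TTheory GRing.Theory Num.Theory.

Module Part1.
Set Implicit Arguments. Unset Strict Implicit. Unset Printing Implicit Defensive.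
Local Open Scope ring_scope.

Lemma inj_card_le (T1 T2 : finType) (A : {set T1}) (B : {set T2}) (f : T1 -> T2) :
  {in A &, injective f} -> (forall x, x \in A -> f x \in B) -> (#|A| <= #|B|)%N.
Proof.
move=> finj fAB; rewrite -(card_in_imset finj); apply: subset_leq_card.
by apply/subsetP => y /imsetP [x xA ->]; exact: fAB.
Qed.

Section Conic.
Variable F : finFieldType.
Local Notation q := #|F|.

Lemma quad_roots_pick (b c y w : F) :
  y ^+ 2 + b * y + c = 0 -> w ^+ 2 + b * w + c = 0 -> y != w -> y = - w - b.
Proof.
move=> hy hw nyw.
have : (y - w) * (y + w + b) = 0.
  by rewrite -[RHS](subrr 0) -{1}hy -{1}hw; ring.
move/eqP; rewrite mulf_eq0 => /orP [|/eqP h].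
  by rewrite subr_eq0 (negPf nyw).
by apply/eqP; rewrite -subr_eq0; apply/eqP; rewrite -h; ring.
Qed.

Lemma card_quad_le2 (b c : F) : (#|[set y : F | (y ^+ 2 + b * y + c == 0)%R]| <= 2)%N.
Proof.
set A := [set _ | _].
pose w1 := odflt 0 [pick w | w ^+ 2 + b * w + c == 0].
have : (#|A| <= #|[set: bool]|)%N.
  apply: (@inj_card_le _ _ A [set: bool] (fun y => y == w1)); last by move=> *; rewrite inE.
  move=> y y'; rewrite !inE => /eqP hy /eqP hy' /=.
  rewrite /w1; case: pickP => [w /eqP hw | /(_ y)]; last by rewrite hy eqxx.
  rewrite /=; case: (eqVneq y w) => [-> | nyw]; case: (eqVneq y' w) => [-> | ny'w] //=.
  by move=> _; rewrite (quad_roots_pick hy hw nyw) (quad_roots_pick hy' hw ny'w).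
by rewrite cardsT card_bool.
Qed.

Lemma card_conic2 (b c : F -> F) :
  (#|[set xy : F * F | (xy.2 ^+ 2 + b xy.1 * xy.2 + c xy.1 == 0)%R]| <= 2 * q)%N.
Proof.
set A := [set _ | _].
pose w1 x := odflt 0 [pick w | w ^+ 2 + b x * w + c x == 0].
have : (#|A| <= #|[set: F * bool]|)%N.
  apply: (@inj_card_le _ _ A _ (fun xy => (xy.1, xy.2 == w1 xy.1))); last by move=> *; rewrite inE.
  move=> [x y] [x' y']; rewrite !inE /= => /eqP hy /eqP hy' [ex].
  subst x'; rewrite /w1; case: pickP => [w /eqP hw | /(_ y)]; last by rewrite hy eqxx.
  rewrite /=; case: (eqVneq y w) => [-> | nyw]; case: (eqVneq y' w) => [-> | ny'w] //=.
  by move=> _; rewrite (quad_roots_pick hy hw nyw) (quad_roots_pick hy' hw ny'w).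
by rewrite cardsT card_prod card_bool mulnC.
Qed.

Definition conicQ (s p r k : F) (xy : F * F) :=
  xy.1 ^+ 2 + s * xy.1 * xy.2 + xy.2 ^+ 2 + p * xy.1 + r * xy.2 + k.

Lemma card_conic1 (s p r k : F) :
  s ^+ 2 - 4 != 0 -> p ^+ 2 - s * p * r + r ^+ 2 + (s ^+ 2 - 4) * k != 0 ->
  (#|[set xy | (conicQ s p r k xy == 0)%R]| <= q + 2)%N.
Proof.
move=> hs hE; set A := [set _ | _].
case: (pickP (fun m : F => m ^+ 2 + s * m + 1 == 0)) => [m /eqP hm | hns].
-
  apply: leq_trans (leq_addr _ _).
  have -> : q = #|[set: F]| by rewrite cardsT.
  apply: (@inj_card_le _ _ A _ (fun xy => xy.2 - m * xy.1)); last by move=> *; rewrite inE.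
  move=> [x y] [x' y']; rewrite !inE /conicQ /= => /eqP hq /eqP hq' hu.
  set u := y - m * x in hu.
  set D := s + 2 * m.
  set L := u * D + p + r * m.
  set c0 := u ^+ 2 + r * u + k.
  have ey : y = m * x + u by rewrite /u; ring.
  have ey' : y' = m * x' + u by rewrite hu; ring.
  have e1 : x * L + c0 = 0.
    rewrite -[RHS](_ : (x ^+ 2 + s * x * y + y ^+ 2 + p * x + r * y + k) - x ^+ 2 * (m ^+ 2 + s * m + 1) = 0); last by rewrite hq hm; ring.
    rewrite ey /L /c0 /D; ring.
  have e2 : x' * L + c0 = 0.
    rewrite -[RHS](_ : (x' ^+ 2 + s * x' * y' + y' ^+ 2 + p * x' + r * y' + k) - x' ^+ 2 * (m ^+ 2 + s * m + 1) = 0); last by rewrite hq' hm; ring.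
    rewrite ey' /L /c0 /D; ring.
  have hL : L != 0.
    apply: contraNneq hE => L0; apply/eqP.
    have c00 : c0 = 0 by rewrite -e1 L0 mulr0 add0r.
    have E : p ^+ 2 - s * p * r + r ^+ 2 + (s ^+ 2 - 4) * k =
       L * (L - 2 * u * D - r * D) + D ^+ 2 * c0 + (r ^+ 2 - 4 * k) * (m ^+ 2 + s * m + 1).
      by rewrite /L /D /c0; ring.
    by rewrite E L0 c00 hm; ring.
  have ex : x = x'.
    apply: (mulIf hL); apply: (addIr c0); by rewrite e1 e2.
  by rewrite ey ey' ex.
-
  have Q2nz (d1 d2 : F) : (d1, d2) != (0, 0) -> d1 ^+ 2 + s * d1 * d2 + d2 ^+ 2 != 0.
    move=> nd; case: (eqVneq d1 0) => [d10 | d1n0].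
      move: nd; rewrite d10 xpair_eqE eqxx /= => d2n0.
      by rewrite expr0n /= mulr0 mul0r !add0r sqrf_eq0.
    have := hns (d2 / d1); apply: contraFN => /eqP h.
    apply/eqP; apply: (mulIf (expf_neq0 2 d1n0)).
    by rewrite mul0r -h; field.
  case: (set_0Vmem A) => [-> | [[x0 y0] P0A]]; first by rewrite cards0.
  move: (P0A); rewrite /A inE /conicQ /= => /eqP hP0.
  have -> : (q + 2 = #|[set: option (option F)]|)%N.
    by rewrite cardsT !card_option addn2.
  pose e (d : F * F) : F * F := if d.1 == 0 then (0, 1) else (1, d.2 / d.1).
  pose t (d : F * F) : F := if d.1 == 0 then d.2 else d.1.
  have edt (d : F * F) : d = (t d * (e d).1, t d * (e d).2).
    rewrite /t /e; case: (eqVneq d.1 0) => [h | h] /=.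
      by rewrite mulr0 mulr1 -h; case: d h.
    by rewrite mulr1 mulrC divfK //; case: d h.
  have ne0 (d : F * F) : e d != (0, 0).
    by rewrite /e; case: (d.1 == 0); rewrite xpair_eqE ?oner_eq0 ?andbF.
  pose f (xy : F * F) : option (option F) :=
    if xy == (x0, y0) then None else Some (if xy.1 - x0 == 0 then None else Some ((xy.2 - y0) / (xy.1 - x0))).
  apply: (@inj_card_le _ _ A _ f); last by move=> *; rewrite inE.
  have key (x y : F) : (x, y) \in A -> (x, y) != (x0, y0) ->
      let d := (x - x0, y - y0) in
      t d * (((e d).1) ^+ 2 + s * (e d).1 * (e d).2 + (e d).2 ^+ 2) +
      ((e d).1 * (2 * x0 + s * y0 + p) + (e d).2 * (s * x0 + 2 * y0 + r)) = 0 /\ t d != 0.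
    move=> xyA nxy d.
    have dnz : d != (0, 0).
      move: nxy; apply: contra; rewrite /d !xpair_eqE !subr_eq0 => /andP [/eqP -> /eqP ->].
      by rewrite !eqxx.
    have tnz : t d != 0.
      apply: contra dnz => /eqP t0; rewrite [d]edt t0 !mul0r.
      by [].
    split => //.
    apply: (mulfI tnz); rewrite mulr0.
    move: xyA; rewrite /A inE /conicQ /= => /eqP hxy.
    set t0 := t d in tnz *; set e1 := (e d).1; set e2 := (e d).2.
    have hx : x = x0 + t0 * e1.
      have := f_equal fst (edt d); rewrite /= -/t0 -/e1 => <-; ring.
    have hy : y = y0 + t0 * e2.
      have := f_equal snd (edt d); rewrite /= -/t0 -/e2 => <-; ring.
    transitivity (((x0 + t0 * e1) ^+ 2 + s * (x0 + t0 * e1) * (y0 + t0 * e2) + (y0 + t0 * e2) ^+ 2 + p * (x0 + t0 * e1) + r * (y0 + t0 * e2) + k) -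
      (x0 ^+ 2 + s * x0 * y0 + y0 ^+ 2 + p * x0 + r * y0 + k)); first by ring.
    by rewrite -hx -hy hxy hP0 subrr.
  move=> [x y] [x' y'] xyA xy'A; rewrite /f.
  case: (eqVneq (x, y) (x0, y0)) => [-> | nxy]; case: (eqVneq (x', y') (x0, y0)) => [-> | nxy'] //= [hdir].
  have [k1 t1] := key x y xyA nxy.
  have [k2 t2] := key x' y' xy'A nxy'.
  set d := (x - x0, y - y0) in k1 t1.
  set d' := (x' - x0, y' - y0) in k2 t2.
  have ee : e d = e d'.
    move: hdir; rewrite /e /d /d' /=.
    by case: (x - x0 == 0); case: (x' - x0 == 0) => //= [[->]].
  rewrite -ee in k2.
  have hQ := Q2nz _ _ (ne0 d).
  have tt : t d = t d'.
    apply: (mulIf hQ); apply: (addIr ((e d).1 * (2 * x0 + s * y0 + p) + (e d).2 * (s * x0 + 2 * y0 + r))).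
    by rewrite k1 k2.
  have : d = d' by rewrite [d]edt [d']edt -ee tt.
  rewrite /d /d' => -[h1 h2].
  have -> : x = x' by rewrite -(subrK x0 x) h1 subrK.
  by rewrite -(subrK y0 y) h2 subrK.
Qed.

End Conic.

End Part1.
Import Part1.

Module Part2.
Set Implicit Arguments. Unset Strict Implicit. Unset Printing Implicit Defensive.
Local Open Scope ring_scope.

Section M2.
Variable F : fieldType.
Implicit Types M N : 'M[F]_2.

Lemma ord2 (i : 'I_2) : i = 0 \/ i = 1.
Proof. case: i => [[|[|m]]] Hi; [left|right|by []]; exact: val_inj. Qed.

Lemma mx2P M N : M 0 0 = N 0 0 -> M 0 1 = N 0 1 -> M 1 0 = N 1 0 -> M 1 1 = N 1 1 -> M = N.
Proof.
move=> h1 h2 h3 h4; apply/matrixP => i j.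
by case: (ord2 i) => ->; case: (ord2 j) => ->.
Qed.

Lemma lift01 : lift ord0 ord0 = 1 :> 'I_2. Proof. exact: val_inj. Qed.
Lemma ord00 : ord0 = 0 :> 'I_2. Proof. exact: val_inj. Qed.

Lemma mul2E M N i j : (M *m N) i j = M i 0 * N 0 j + M i 1 * N 1 j.
Proof. by rewrite mxE !big_ord_recl big_ord0 addr0 lift01 ord00. Qed.

Lemma tr2E M : \tr M = M 0 0 + M 1 1.
Proof. by rewrite /mxtrace !big_ord_recl big_ord0 addr0 lift01 ord00. Qed.

Lemma det2E M : \det M = M 0 0 * M 1 1 - M 0 1 * M 1 0.
Proof.
rewrite (expand_det_row _ 0) !big_ord_recl big_ord0 addr0 /cofactor !det_mx11 !mxE /=.
have -> : M (lift 0 0) (lift ord0 0) = M 1 1 by congr (M _ _); apply: val_inj.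
have -> : M (lift 0 0) (lift (lift ord0 ord0) 0) = M 1 0 by congr (M _ _); apply: val_inj.
have -> : M 0 (lift ord0 ord0) = M 0 1 by congr (M _ _); apply: val_inj.
have -> : M 0 ord0 = M 0 0 by congr (M _ _); apply: val_inj.
rewrite /= expr0 expr1; ring.
Qed.

Definition mk2 (a b c d : F) : 'M[F]_2 :=
  \matrix_(i < 2, j < 2) (if i == 0 then (if j == 0 then a else b) else (if j == 0 then c else d)).

Lemma mk2E00 a b c d : mk2 a b c d 0 0 = a. Proof. by rewrite mxE. Qed.
Lemma mk2E01 a b c d : mk2 a b c d 0 1 = b. Proof. by rewrite mxE. Qed.
Lemma mk2E10 a b c d : mk2 a b c d 1 0 = c. Proof. by rewrite mxE. Qed.
Lemma mk2E11 a b c d : mk2 a b c d 1 1 = d. Proof. by rewrite mxE. Qed.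
Definition mk2E := (mk2E00, mk2E01, mk2E10, mk2E11).

Lemma id2E : ((1%:M : 'M[F]_2) 0 0 = 1) * ((1%:M : 'M[F]_2) 0 1 = 0) *
   ((1%:M : 'M[F]_2) 1 0 = 0) * ((1%:M : 'M[F]_2) 1 1 = 1).
Proof. by rewrite !mxE. Qed.

Lemma inv2E M : \det M = 1 -> invmx M = mk2 (M 1 1) (- M 0 1) (- M 1 0) (M 0 0).
Proof.
move=> hd; have U : M \in unitmx by rewrite unitmxE hd unitr1.
set B := mk2 _ _ _ _.
have MB : M *m B = 1%:M.
  move: hd; rewrite det2E => hd.
  apply: mx2P; rewrite !mul2E !mk2E !mxE /= -hd; ring.
by rewrite -[RHS]mul1mx -(mulVmx U) -mulmxA MB mulmx1.
Qed.

Definition comp (c : F) := mk2 0 (-1) 1 c.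

Definition nonscalar M := ~~ [&& M 0 1 == 0, M 1 0 == 0 & M 0 0 == M 1 1].

Lemma normal_form M : \det M = 1 -> nonscalar M ->
  exists S, S \in unitmx /\ M *m S = S *m comp (\tr M).
Proof.
rewrite det2E tr2E /nonscalar => hd.
have h' : M 0 1 * M 1 0 = M 0 0 * M 1 1 - 1 by rewrite -hd; ring.
case: (eqVneq (M 1 0) 0) => h10; last first.
  exists (mk2 1 (M 0 0) 0 (M 1 0)); split.
    rewrite unitmxE det2E !mk2E unitfE; apply: contra h10 => /eqP h; apply/eqP; rewrite -h; ring.
  by apply: mx2P; rewrite !mul2E /comp !mk2E; [ring | rewrite -[X in X * -1]hd; ring | ring | ring].
case: (eqVneq (M 0 1) 0) => h01; last first.
  exists (mk2 0 (M 0 1) 1 (M 1 1)); split.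
    rewrite unitmxE det2E !mk2E unitfE; apply: contra h01 => /eqP h; rewrite -oppr_eq0; apply/eqP; rewrite -h; ring.
  by apply: mx2P; rewrite !mul2E /comp !mk2E; [ring | rewrite ?h10; ring | ring | rewrite -[X in X * -1]hd h10; ring].
rewrite /= => hne.
exists (mk2 1 (M 0 0) 1 (M 1 1)); split.
  rewrite unitmxE det2E !mk2E unitfE; apply: contra hne => /eqP h; rewrite -subr_eq0 -oppr_eq0; apply/eqP; rewrite -h; ring.
by apply: mx2P; rewrite !mul2E /comp !mk2E; [rewrite h01; ring | rewrite -[X in X * -1]hd h10 h01; ring | rewrite h10; ring | rewrite -[X in X * -1]hd h10 h01; ring].
Qed.

End M2.

Section GL.
Variable F : finFieldType.
Local Notation gT := {'GL_2[F]}.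
Local Notation G := (SL2 F).
Local Open Scope group_scope.

Definition mat (u : gT) : 'M[F]_2 := GLval u.

Lemma inG u : (u \in G) = (\det (mat u) == 1)%R.
Proof. by rewrite inE. Qed.

Lemma matM u v : mat (u * v) = (mat u *m mat v)%R.
Proof. by []. Qed.

Lemma matV u : mat (u^-1) = invmx (mat u).
Proof. by []. Qed.

Lemma mat_unit u : mat u \in unitmx.
Proof. exact: (@GL_unitmx 2 F u). Qed.

Lemma mat_inj : injective mat.
Proof. exact: val_inj. Qed.

Lemma mulG u v : u \in G -> v \in G -> u * v \in G.
Proof. by rewrite !inG matM det_mulmx => /eqP -> /eqP ->; rewrite mulr1. Qed.

Lemma invG u : u \in G -> u^-1 \in G.
Proof. by rewrite !inG matV det_inv => /eqP ->; rewrite invr1. Qed.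

Lemma conjG u v : u \in G -> v \in G -> u ^ v \in G.
Proof. by move=> uG vG; rewrite conjgE mulG ?invG ?mulG. Qed.

Lemma matJ h u : mat (h ^ u) = (invmx (mat u) *m mat h *m mat u)%R.
Proof. by rewrite conjgE !matM matV mulmxA. Qed.

Lemma trJ h u : \tr (mat (h ^ u)) = \tr (mat h).
Proof.
by rewrite matJ -mulmxA mxtrace_mulC -mulmxA mulmxV ?mat_unit // mulmx1.
Qed.

Lemma tr_class x y : y \in x ^: G -> \tr (mat y) = \tr (mat x).
Proof. by case/imsetP => u _ ->; rewrite trJ. Qed.

Definition Cen (g : gT) := [set x in G | x * g == g * x].

Lemma fiber_cen (g X : gT) : g \in G -> (#|[set w in G | (g ^ w == X)%g]| <= #|Cen g|)%N.
Proof.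
move=> gG; set A := [set _ in _ | _].
case: (set_0Vmem A) => [-> | [w0 w0A]]; first by rewrite cards0.
move: (w0A); rewrite inE => /andP [w0G /eqP hw0].
apply: (@inj_card_le _ _ A _ (fun w => w * w0^-1)).
  by move=> w w' _ _ /mulIg.
move=> w; rewrite inE => /andP [wG /eqP hw].
rewrite inE mulG ?invG //=.
have : g ^ (w * w0^-1) = g by rewrite conjgM hw -hw0 conjgK.
rewrite conjgE => h.
by apply/eqP; rewrite -{1}h mulKVg.
Qed.

End GL.

End Part2.
Import Part2.

Module Part3.
Set Implicit Arguments. Unset Strict Implicit. Unset Printing Implicit Defensive.
Local Open Scope ring_scope.

Section Cj.
Variable F : fieldType.
Implicit Types M N S : 'M[F]_2.

Definition cj S M := invmx S *m M *m S.

Lemma cj_tr S M : S \in unitmx -> \tr (cj S M) = \tr M.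
Proof. by move=> U; rewrite /cj -mulmxA mxtrace_mulC -mulmxA mulmxV // mulmx1. Qed.

Lemma cj_det S M : S \in unitmx -> \det (cj S M) = \det M.
Proof.
move=> U; rewrite /cj !det_mulmx det_inv mulrC mulrA mulrV ?mul1r //.
Qed.

Lemma cj_inj S M N : S \in unitmx -> cj S M = cj S N -> M = N.
Proof.
rewrite /cj => U h; have h1 := congr1 (mulmx^~ (invmx S)) h; rewrite /= !mulmxK // in h1.
by have h2 := congr1 (mulmx S) h1; rewrite !mulKVmx // in h2.
Qed.

Lemma cjM S M N : S \in unitmx -> cj S (M *m N) = cj S M *m cj S N.
Proof. by move=> U; rewrite /cj !mulmxA mulmxK. Qed.

Lemma inv_uniq M N : M *m N = 1%:M -> invmx M = N.
Proof.
move=> MN; have [UM _] := mulmx1_unit MN.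
by rewrite -[RHS]mul1mx -(mulVmx UM) -mulmxA MN mulmx1.
Qed.

Lemma cjV S M : S \in unitmx -> M \in unitmx -> cj S (invmx M) = invmx (cj S M).
Proof.
move=> U UM; apply/esym/inv_uniq.
by rewrite -cjM // mulmxV // /cj mulmx1 mulVmx.
Qed.

Lemma cj_nf S M c : S \in unitmx -> M *m S = S *m comp c -> cj S M = comp c.
Proof. by move=> U h; rewrite /cj -mulmxA h mulmxA mulVmx // mul1mx. Qed.

Lemma comm_comp M s : M *m comp s = comp s *m M -> M 0 1 = - M 1 0 /\ M 1 1 = M 0 0 + s * M 1 0.
Proof.
move=> h.
have h1 := congr1 (fun A : 'M[F]_2 => A 0 0) h; have h2 := congr1 (fun A : 'M[F]_2 => A 0 1) h.
move: h1 h2; rewrite /= !mul2E /comp !mk2E => h1 h2.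
have e1 : M 0 1 = - M 1 0.
  by move: h1; rewrite mulr0 add0r mulr1 mul0r add0r mulN1r.
move: h2; rewrite mul0r add0r mulN1r => h2.
have e2 : M 1 1 = - (M 0 0 * -1 + M 0 1 * s) by rewrite h2 opprK.
by split => //; rewrite e2 e1; ring.
Qed.

Lemma nonscalar_tr M : \det M = 1 -> (\tr M) ^+ 2 - 4 != 0 -> nonscalar M.
Proof.
rewrite det2E tr2E /nonscalar => hd; apply: contra => /and3P [/eqP h1 /eqP h2 /eqP h3].
move: hd; rewrite h1 h2 h3 mulr0 subr0 => hd.
by apply/eqP; rewrite -hd; ring.
Qed.

End Cj.

Section Bounds.
Variable F : finFieldType.
Local Notation gT := {'GL_2[F]}.
Local Notation G := (SL2 F).
Local Notation q := #|F|.

Lemma card_Cen (g : gT) : g \in G -> (\tr (mat g)) ^+ 2 - 4 != 0 -> (#|Cen g| <= q + 2)%N.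
Proof.
move=> gG hs; have hd : \det (mat g) = 1 by apply/eqP; rewrite -inG.
have [S [U hS]] := normal_form hd (nonscalar_tr hd hs).
set s := \tr (mat g) in hs hS.
apply: leq_trans (card_conic1 (p:=0) (r:=0) (k:=-1) hs _); last first.
  have -> : 0 ^+ 2 - s * 0 * 0 + 0 ^+ 2 + (s ^+ 2 - 4) * -1 = - (s ^+ 2 - 4) :> F by ring.
  by rewrite oppr_eq0.
pose f (X : gT) := (cj S (mat X) 0 0, cj S (mat X) 1 0).
have key (X : gT) : X \in Cen g ->
    cj S (mat X) 0 1 = - cj S (mat X) 1 0 /\ cj S (mat X) 1 1 = cj S (mat X) 0 0 + s * cj S (mat X) 1 0.
  rewrite inE => /andP [_ /eqP hc]; apply: comm_comp.
  by rewrite -(cj_nf U hS) -!cjM // -!matM hc.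
apply: (@inj_card_le _ _ (Cen g) [set xy | conicQ s 0 0 (-1) xy == 0] f).
  move=> X Y XC YC [e1 e2]; apply: mat_inj; apply: (cj_inj U).
  have [k1 k2] := key X XC; have [k3 k4] := key Y YC.
  by apply: mx2P; rewrite ?k1 ?k2 ?k3 ?k4 ?e1 ?e2.
move=> X XC; rewrite inE /conicQ /=.
have [k1 k2] := key X XC.
move: XC; rewrite inE => /andP [XG _]; move: XG; rewrite inG -(cj_det _ U) det2E k1 k2 => /eqP h.
by apply/eqP; rewrite -[RHS](subrr 1) -{1}h; ring.
Qed.

Lemma card_L2 (g : gT) (a t : F) : g \in G -> (\tr (mat g)) ^+ 2 - 4 != 0 ->
  (#|[set Y in G | (\tr (mat Y) == a) && (\tr (mat g *m mat Y) == t)]| <= 2 * q)%N.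
Proof.
move=> gG hs; have hd : \det (mat g) = 1 by apply/eqP; rewrite -inG.
have [S [U hS]] := normal_form hd (nonscalar_tr hd hs).
set s := \tr (mat g) in hs hS.
apply: leq_trans (card_conic2 (fun x => t - s * (a - x)) (fun x => 1 - x * (a - x))).
pose f (X : gT) := (cj S (mat X) 0 0, cj S (mat X) 1 0).
have key (X : gT) : X \in [set Y in G | (\tr (mat Y) == a) && (\tr (mat g *m mat Y) == t)] ->
    cj S (mat X) 1 1 = a - cj S (mat X) 0 0 /\
    cj S (mat X) 0 1 = t + cj S (mat X) 1 0 - s * (a - cj S (mat X) 0 0) /\
    \det (cj S (mat X)) = 1.
  rewrite inE => /and3P [XG /eqP ha /eqP ht].
  have hX : \det (cj S (mat X)) = 1 by rewrite cj_det //; apply/eqP; rewrite -inG.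
  rewrite -(cj_tr _ U) in ha; rewrite -(cj_tr _ U) cjM // (cj_nf U hS) in ht.
  move: (cj S (mat X)) ha ht hX => M ha ht hX.
  rewrite tr2E in ha; rewrite tr2E !mul2E /comp !mk2E in ht.
  have e1 : M 1 1 = a - M 0 0 by rewrite -ha; ring.
  split => //; split => //.
  rewrite -ht e1; ring.
apply: (@inj_card_le _ _ _ _ f).
  move=> X Y XC YC [e1 e2]; apply: mat_inj; apply: (cj_inj U).
  have [k1 [k2 _]] := key X XC; have [k3 [k4 _]] := key Y YC.
  by apply: mx2P; rewrite ?k1 ?k2 ?k3 ?k4 ?e1 ?e2.
move=> X XC; rewrite inE /=.
have [k1 [k2 h]] := key X XC.
move: h; rewrite det2E k1 k2 => h.
by apply/eqP; rewrite -[RHS](subrr 1) -{1}h; ring.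
Qed.

Lemma card_L3 (z : gT) (a b : F) : z \in G -> (\tr (mat z)) ^+ 2 - 4 != 0 ->
  a ^+ 2 - \tr (mat z) * a * b + b ^+ 2 + ((\tr (mat z)) ^+ 2 - 4) != 0 ->
  (#|[set X in G | (\tr (mat X) == a) && (\tr (invmx (mat X) *m mat z) == b)]| <= q + 2)%N.
Proof.
move=> zG hs hE; have hd : \det (mat z) = 1 by apply/eqP; rewrite -inG.
have [S [U hS]] := normal_form hd (nonscalar_tr hd hs).
set c := \tr (mat z) in hs hS hE.
apply: leq_trans (card_conic1 (p:=-a) (r:=-b) (k:=1) hs _); last first.
  have -> : (- a) ^+ 2 - c * - a * - b + (- b) ^+ 2 + (c ^+ 2 - 4) * 1 =
     a ^+ 2 - c * a * b + b ^+ 2 + (c ^+ 2 - 4) :> F by ring.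
  by [].
pose f (X : gT) := (cj S (mat X) 0 0, cj S (mat X) 1 0).
have key (X : gT) : X \in [set X in G | (\tr (mat X) == a) && (\tr (invmx (mat X) *m mat z) == b)] ->
    cj S (mat X) 1 1 = a - cj S (mat X) 0 0 /\
    cj S (mat X) 0 1 = cj S (mat X) 1 0 + c * cj S (mat X) 0 0 - b /\
    \det (cj S (mat X)) = 1.
  rewrite inE => /and3P [XG /eqP ha /eqP hb].
  have hX : \det (cj S (mat X)) = 1 by rewrite cj_det //; apply/eqP; rewrite -inG.
  rewrite -(cj_tr _ U) in ha; rewrite -(cj_tr _ U) cjM // (cj_nf U hS) cjV ?mat_unit // in hb.
  move: (cj S (mat X)) ha hb hX => M ha hb hX.
  rewrite inv2E // in hb.
  rewrite tr2E in ha; rewrite tr2E !mul2E /comp !mk2E in hb.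
  have e1 : M 1 1 = a - M 0 0 by rewrite -ha; ring.
  split => //; split => //.
  rewrite -hb; ring.
apply: (@inj_card_le _ _ _ _ f).
  move=> X Y XC YC [e1 e2]; apply: mat_inj; apply: (cj_inj U).
  have [k1 [k2 _]] := key X XC; have [k3 [k4 _]] := key Y YC.
  by apply: mx2P; rewrite ?k1 ?k2 ?k3 ?k4 ?e1 ?e2.
move=> X XC; rewrite inE /conicQ /=.
have [k1 [k2 h]] := key X XC.
move: h; rewrite det2E k1 k2 => h.
by apply/eqP; rewrite -[RHS](subrr 1) -{1}h; ring.
Qed.

Lemma card_trfib (c : F) : (#|[set X in G | \tr (mat X) == c]| <= 2 * (q * q))%N.
Proof.
pose f (X : gT) := (mat X 0 1 == 0, mat X 0 0, if mat X 0 1 == 0 then mat X 1 0 else mat X 0 1).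
have -> : (2 * (q * q) = #|[set: bool * F * F]|)%N by rewrite cardsT !card_prod card_bool mulnA.
apply: (@inj_card_le _ _ _ _ f); last by move=> *; rewrite inE.
move=> X Y; rewrite !inE /f => /andP [XG /eqP hX] /andP [YG /eqP hY] [e1 e2 e3].
move: XG YG; rewrite !det2E => /eqP dX /eqP dY.
move: hX hY; rewrite !tr2E => hX hY.
have eX : mat X 1 1 = c - mat X 0 0 by rewrite -hX; ring.
have eY : mat Y 1 1 = c - mat Y 0 0 by rewrite -hY; ring.
apply: mat_inj; move: e1 e3.
case: (eqVneq (mat X 0 1) 0) => hx; case: (eqVneq (mat Y 0 1) 0) => hy //= _ e3.
  by apply: mx2P; rewrite ?hx ?hy ?eX ?eY ?e2 ?e3.
apply: mx2P; rewrite ?eX ?eY ?e2 ?e3 //.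
apply: (mulfI hy); rewrite -{1}e3.
have hx' : mat X 0 1 * mat X 1 0 = mat X 0 0 * mat X 1 1 - 1 by rewrite -dX; ring.
have hy' : mat Y 0 1 * mat Y 1 0 = mat Y 0 0 * mat Y 1 1 - 1 by rewrite -dY; ring.
by rewrite hx' hy' eX eY e2.
Qed.

End Bounds.

Definition trm (F : finFieldType) (x : {'GL_2[F]}) : F := \tr (mat x).

End Part3.
Import Part3.

Module Part4.
Set Implicit Arguments. Unset Strict Implicit. Unset Printing Implicit Defensive.

Lemma fiber_sum (T1 T2 : finType) (A : {set T1}) (B : {set T2}) (f : T1 -> T2) :
  #|[set x in A | f x \in B]| = \sum_(y in B) #|[set x in A | f x == y]|.
Proof.
rewrite -sum1_card (partition_big f (mem B)) /=; last by move=> x; rewrite inE => /andP[].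
apply: eq_bigr => y yB; rewrite -sum1_card; apply: eq_bigl => x; rewrite !inE.
by case: (eqVneq (f x) y) => [->|]; rewrite ?yB ?andbT ?andbF.
Qed.

Lemma fiber_le (T1 T2 : finType) (A : {set T1}) (B : {set T2}) (f : T1 -> T2) K :
  (forall y, y \in B -> #|[set x in A | f x == y]| <= K) ->
  #|[set x in A | f x \in B]| <= K * #|B|.
Proof.
move=> hK; rewrite fiber_sum mulnC -sum_nat_const; exact: leq_sum.
Qed.

Lemma inSet (T : finType) (A : {set T}) (P : pred T) x :
  (x \in [set y in A | P y]) = (x \in A) && P x.
Proof. by rewrite inE. Qed.

Lemma card_sub_le (T : finType) (A B : {set T}) : (forall x, x \in A -> x \in B) -> #|A| <= #|B|.
Proof. by move=> h; apply: subset_leq_card; apply/subsetP. Qed.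

Section Count.
Variable F : finFieldType.
Local Notation gT := {'GL_2[F]}.
Local Notation G := (SL2 F).
Local Notation q := #|F|.
Local Notation N := #|G|.
Local Open Scope group_scope.

Definition good (x : gT) := (x \in G) && (trm x ^+ 2 - 4 != 0)%R.

Lemma count_trconj (g h : gT) (c : F) : good g -> good h ->
  #|[set w in G | trm (g * h ^ w) == c]| <= (q + 2) * (2 * q).
Proof.
move=> /andP [gG hg] /andP [hG hh].
set B := [set Y in G | (trm Y == trm h) && (trm (g * Y) == c)].
apply: leq_trans (_ : #|[set w in G | h ^ w \in B]| <= _).
  apply: card_sub_le => w; rewrite !inSet => /andP [wG hw].
  by rewrite wG conjG //= /trm trJ eqxx.
apply: leq_trans (@fiber_le _ _ G B (fun w => h ^ w) (q + 2) _) _.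
  move=> Y _; apply: leq_trans (fiber_cen _ hG) _; exact: card_Cen.
by rewrite leq_mul2l card_L2 ?orbT.
Qed.

Lemma count_part1 (g h x : gT) : good g -> good h ->
  #|[set u in G | g * h ^ u \in x ^: G]| <= (q + 2) * (2 * q).
Proof.
move=> gg hg; apply: leq_trans (count_trconj (trm x) gg hg).
apply: card_sub_le => u; rewrite !inSet => /andP [uG hu].
by rewrite uG /= /trm (tr_class hu).
Qed.

Lemma count_n (g h z : gT) : good g -> good h -> z \in G -> (trm z ^+ 2 - 4 != 0)%R ->
  (trm g ^+ 2 - trm z * trm g * trm h + trm h ^+ 2 + (trm z ^+ 2 - 4) != 0)%R ->
  #|[set uv in setX G G | g ^ uv.1 * h ^ uv.2 == z]| <= (q + 2) * (q + 2) * (q + 2).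
Proof.
move=> gg hg zG hz hE; move: (gg) (hg) => /andP [gG gs] /andP [hG hs].
set A := [set uv in setX G G | _].
set B3 := [set X in G | (trm X == trm g) && (trm (X^-1 * z) == trm h)].
apply: leq_trans (_ : #|[set uv in A | g ^ uv.1 \in B3]| <= _).
  apply: card_sub_le => -[u v]; rewrite !inSet in_setX /= => /andP [/andP [uG vG] /eqP e].
  have -> : (g ^ u)^-1 * z = h ^ v by rewrite -e mulKg.
  by rewrite uG vG /= e eqxx conjG // /trm !trJ !eqxx.
apply: leq_trans (@fiber_le _ _ A B3 (fun uv => g ^ uv.1) ((q + 2) * (q + 2)) _) _.
  move=> X _.
  apply: leq_trans (_ : #|setX [set u in G | g ^ u == X] [set v in G | h ^ v == X^-1 * z]| <= _).
    apply: card_sub_le => -[u v]; rewrite !inSet in_setX /= => /andP [/andP [/andP [uG vG] /eqP e] /eqP eX].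
    by rewrite in_setX !inSet uG vG -eX -e mulKg !eqxx.
  rewrite cardsX; apply: leq_mul.
    exact: leq_trans (fiber_cen _ gG) (card_Cen gG gs).
  exact: leq_trans (fiber_cen _ hG) (card_Cen hG hs).
rewrite leq_mul2l; apply/orP; right.
exact: (card_L3 (a := trm g) (b := trm h) zG hz hE).
Qed.

Lemma sum_n (g h : gT) : g \in G -> h \in G ->
  \sum_(z in G) #|[set uv in setX G G | (g ^ uv.1 * h ^ uv.2 == z)%g]| = (N * N)%N.
Proof.
move=> gG hG; rewrite -(fiber_sum (setX G G) G (fun uv => g ^ uv.1 * h ^ uv.2)) -cardsX.
apply: eq_card => -[u v]; rewrite inSet /=.
case: (boolP ((u, v) \in setX G G)) => //; rewrite in_setX => /andP [uG vG].
by rewrite mulG ?conjG.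
Qed.

Lemma trm_shift (g h u v : gT) : trm (g ^ u * h ^ v) = trm (g * h ^ (v * u^-1)).
Proof.
have -> : g ^ u * h ^ v = (g * h ^ (v * u^-1)) ^ u by rewrite conjMg -conjgM mulgKV.
by rewrite /trm trJ.
Qed.

Lemma count_trpair (g h : gT) (c : F) : good g -> good h ->
  #|[set uv in setX G G | trm (g ^ uv.1 * h ^ uv.2) == c]| <= ((q + 2) * (2 * q)) * N.
Proof.
move=> gg hg; set S := [set uv in setX G G | _].
apply: leq_trans (_ : #|[set uv in S | uv.1 \in G]| <= _).
  by apply: card_sub_le => -[u v] uvS; rewrite inSet uvS /=; move: uvS; rewrite inSet in_setX => /andP [/andP [] ].
apply: (@fiber_le _ _ S G (fun uv => uv.1)) => u uG.
apply: leq_trans (count_trconj c gg hg).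
apply: (@inj_card_le _ _ _ _ (fun uv => uv.2 * u^-1)).
  move=> [u1 v1] [u2 v2]; rewrite !inSet /= => /andP [_ /eqP e1] /andP [_ /eqP e2] /mulIg e.
  by rewrite e1 e2 e.
move=> [u1 v]; rewrite !inSet in_setX /= => /andP [/andP [/andP [_ vG] hc] /eqP e].
by rewrite mulG ?invG //= -trm_shift -e.
Qed.

Definition Bset (a b : F) := [set c : F | (c ^+ 2 - 4 == 0) || (a ^+ 2 - c * a * b + b ^+ 2 + (c ^+ 2 - 4) == 0)]%R.

Lemma card_Bset a b : #|Bset a b| <= 4.
Proof.
have -> : Bset a b = [set c : F | (c ^+ 2 + 0 * c + (-4) == 0)%R] :|:
    [set c : F | (c ^+ 2 + (- (a * b)) * c + (a ^+ 2 + b ^+ 2 - 4) == 0)%R].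
  apply/setP => c; rewrite !inE.
  have -> : (c ^+ 2 + 0 * c + (-4) = c ^+ 2 - 4)%R by ring.
  by have -> : (c ^+ 2 + (- (a * b)) * c + (a ^+ 2 + b ^+ 2 - 4) = a ^+ 2 - c * a * b + b ^+ 2 + (c ^+ 2 - 4))%R by ring.
rewrite cardsU; apply: leq_trans (leq_subr _ _) _.
exact: leq_trans (leq_add (card_quad_le2 _ _) (card_quad_le2 _ _)) _.
Qed.

Lemma count_bad_sum (g h : gT) : good g -> good h ->
  \sum_(z in [set z in G | trm z \in Bset (trm g) (trm h)])
     #|[set uv in setX G G | (g ^ uv.1 * h ^ uv.2 == z)%g]| <= ((((q + 2) * (2 * q)) * N) * 4)%N.
Proof.
move=> gg hg; rewrite -fiber_sum.
apply: leq_trans (_ : #|[set uv in setX G G | trm (g ^ uv.1 * h ^ uv.2) \in Bset (trm g) (trm h)]| <= _).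
  by apply: card_sub_le => uv; rewrite !inSet => /andP [-> /andP [_ ->]].
apply: leq_trans (@fiber_le _ _ (setX G G) (Bset (trm g) (trm h)) (fun uv => trm (g ^ uv.1 * h ^ uv.2)) _ _) _.
  by move=> c _; apply: count_trpair.
by rewrite leq_mul2l card_Bset orbT.
Qed.

Lemma card_G_lb : q * q.-1 * q.+1 <= N.
Proof.
have q1 : 1 < q.
  apply: leq_trans (_ : #|[set (0 : F)%R; 1%R]| <= _); last exact: max_card.
  by rewrite cards2 eq_sym oner_eq0.
have hGL : q * q.-1 ^ 2 * q.+1 <= N * q.-1.
  rewrite -card_GL_2.
  apply: leq_trans (_ : #|[set x in [set: gT] | (\det (mat x))%R \in [set~ (0 : F)%R]]| <= _).
    by apply: card_sub_le => x _; rewrite !inE; exact: (@GL_det 2 F x).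
  apply: leq_trans (@fiber_le _ _ [set: gT] [set~ (0 : F)%R] (fun x => \det (mat x))%R N _) _.
    move=> l; rewrite !inE => l0.
    set Fb := [set x in [set: gT] | _].
    case: (set_0Vmem Fb) => [-> | [y0 y0F]]; first by rewrite cards0.
    move: y0F; rewrite inSet => /andP [_ /eqP hy0].
    apply: (@inj_card_le _ _ Fb G (fun x => x * y0^-1)).
      by move=> x x' _ _ /mulIg.
    move=> x; rewrite inSet => /andP [_ /eqP hx].
    rewrite inG matM matV det_mulmx det_inv hx hy0 mulfV //.
  by rewrite cardsC1.
have p : (0 < q.-1)%N by rewrite -ltnS prednK // ltnW.
rewrite -(leq_pmul2r p); apply: leq_trans hGL.
by rewrite (_ : (q * q.-1 ^ 2 * q.+1 = q * q.-1 * q.+1 * q.-1)%N) //; ring.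
Qed.

Lemma card_bad : #|[set x in G | ~~ good x]| <= (2 * (q * q)) * 2.
Proof.
apply: leq_trans (_ : #|[set x in G | trm x \in [set c : F | (c ^+ 2 + 0 * c + (-4) == 0)%R]]| <= _).
  apply: card_sub_le => x; rewrite !inSet /good => /andP [-> /=]; rewrite negbK inE.
  by have -> : (trm x ^+ 2 + 0 * trm x + (-4) = trm x ^+ 2 - 4)%R by ring.
apply: leq_trans (@fiber_le _ _ G _ (@trm F) (2 * (q * q)) _) _.
  by move=> c _; apply: card_trfib.
by rewrite leq_mul2l card_quad_le2 orbT.
Qed.

End Count.

End Part4.
Import Part4.

Module Part5.
Set Implicit Arguments. Unset Strict Implicit. Unset Printing Implicit Defensive.

Section Real.
Variables (F : finFieldType) (R : realFieldType).
Local Notation gT := {'GL_2[F]}.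
Local Notation G := (SL2 F).
Local Notation q := #|F|.
Local Notation N := #|G|.

Lemma q_ge2 : (1 < q)%N.
Proof.
apply: leq_trans (_ : #|[set (0 : F)%R; 1%R]| <= _)%N; last exact: max_card.
by rewrite cards2 eq_sym oner_eq0.
Qed.

Lemma N_pos : (0 < N)%N.
Proof.
apply: leq_trans (card_G_lb F); have := q_ge2.
by case: #|F| => [|[|m]] //.
Qed.

Lemma ratio_le (n : nat) : (n * q <= 100 * N)%N -> (n%:R / N%:R <= 100%:R / q%:R :> R)%R.
Proof.
move=> h; have Np : (0 < N%:R :> R)%R by rewrite ltr0n N_pos.
have qp : (0 < q%:R :> R)%R by rewrite ltr0n; apply: ltnW q_ge2.
rewrite ler_pdivrMr // mulrAC ler_pdivlMr // -!natrM ler_nat.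
exact: h.
Qed.

Definition nz (g h z : gT) := #|[set uv in setX G G | (g ^ uv.1 * h ^ uv.2 == z)%g]|.

Lemma probC_bound (g h x : gT) : good g -> good h ->
  (probC R g h (x ^: G)%g <= 100%:R / q%:R)%R.
Proof.
move=> gg hg; rewrite /probC; apply: ratio_le.
have h1 := count_part1 x gg hg; have h2 := card_G_lb F; have h3 := q_ge2.
move: h1 h2 h3; move: #|[set u in G | _]| N => n M.
case: #|F| => [|[|m]] //= h1 h2 _; nia.
Qed.

Lemma sdist_bound (g h : gT) : good g -> good h ->
  (sdist_unif R g h <= 100%:R / q%:R)%R.
Proof.
move=> gg hg; move: (gg) (hg) => /andP [gG gs] /andP [hG hs].
set K0 := ((q + 2) * (q + 2) * (q + 2))%N.
set L := (q * q.-1 * q.+1)%N.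
set K1 := ((q + 2) * (2 * q))%N.
have NL : (L <= N)%N := card_G_lb F.
have LK0 : (L <= K0)%N.
  rewrite /L /K0; have := q_ge2; case: #|F| => [|[|m]] //= _; nia.
have Np : (0 < N%:R :> R)%R by rewrite ltr0n N_pos.
pose bad z := trm z \in Bset (trm g) (trm h).
pose y z : nat := if bad z then nz g h z else (K0 - L)%N.
have hy z : z \in G -> (`|(nz g h z)%:R - N%:R| <= 2 * (y z)%:R - ((nz g h z)%:R - N%:R) :> R)%R.
  move=> zG; rewrite /y; case: ifP => bz.
    rewrite ler_norml; apply/andP; split.
      have : (0 <= (nz g h z)%:R :> R)%R by [].
      lra.
    have : (0 <= N%:R :> R)%R by [].
    lra.
  have nK : (nz g h z <= K0)%N.
    move/negbT: bz; rewrite /bad inE negb_or => /andP [b1 b2].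
    exact: (count_n gg hg zG b1 b2).
  have nK' : ((nz g h z)%:R <= K0%:R :> R)%R by rewrite ler_nat.
  have NL' : (L%:R <= N%:R :> R)%R by rewrite ler_nat.
  rewrite natrB //.
  have : (L%:R <= K0%:R :> R)%R by rewrite ler_nat.
  rewrite ler_norml; move=> *; apply/andP; split; lra.
have sumx : (\sum_(z in G) ((nz g h z)%:R - N%:R) = 0 :> R)%R.
  rewrite sumrB -natr_sum /nz sum_n // sumr_const natrM.
  by rewrite mulr_natl subrr.
have sumy : (\sum_(z in G) y z <= 4 * K1 * N + N * (K0 - L))%N.
  apply: leq_trans (_ : \sum_(z in G) ((if bad z then nz g h z else 0) + (K0 - L)) <= _)%N.
    by apply: leq_sum => z _; rewrite /y; case: (bad z); rewrite ?leq_addr ?add0n.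
  rewrite big_split /= sum_nat_const leq_add2r -big_mkcondr /=.
  apply: leq_trans (_ : \sum_(z in [set z in G | bad z]) nz g h z <= _)%N.
    by rewrite (eq_bigl (fun z => (z \in G) && bad z)) // => z; rewrite inE.
  apply: leq_trans (count_bad_sum gg hg) _.
  by rewrite /K1 mulnC mulnA.
rewrite /sdist_unif.
have ex z : (CCprob R g h z - N%:R^-1 = ((nz g h z)%:R - N%:R) / (N * N)%:R :> R)%R.
  rewrite /CCprob /nz expnS expn1 natrM; field.
  by rewrite lt0r_neq0.
have ex' z : (`|CCprob R g h z - N%:R^-1| = `|(nz g h z)%:R - N%:R| / (N * N)%:R :> R)%R.
  by rewrite ex normrM normfV normr_nat.
rewrite (eq_bigr _ (fun z _ => ex' z)).
rewrite -mulr_suml.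
apply: le_trans (_ : (2^-1 * ((2 * (\sum_(z in G) y z)%:R) / (N * N)%:R) <= _)%R).
  rewrite ler_pM2l ?invr_gt0 ?ltr0n //.
  rewrite ler_pM2r ?invr_gt0 ?ltr0n ?muln_gt0 ?N_pos //.
  apply: le_trans (ler_sum _ hy) _.
  by rewrite sumrB sumx subr0 -mulr_sumr natr_sum.
apply: le_trans (_ : ((4 * K1 + (K0 - L))%:R / N%:R <= _)%R); last first.
  apply: ratio_le; rewrite /K1 /K0 /L.
  have := card_G_lb F; have := q_ge2.
  move: N => M; case: #|F| => [|[|m]] //= _ h2; nia.
rewrite !mulrA mulVf ?pnatr_eq0 // mul1r.
have Np' : (0 < (N * N)%:R :> R)%R by rewrite ltr0n muln_gt0 N_pos.
rewrite ler_pdivrMr // mulrAC ler_pdivlMr // -!natrM ler_nat.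
rewrite mulnA; apply: leq_mul => //.
by apply: leq_trans sumy _; rewrite mulnDl [N * _]mulnC.
Qed.

End Real.

End Part5.
Import Part5.

Module Part6.
Set Implicit Arguments. Unset Strict Implicit. Unset Printing Implicit Defensive.

Section Marg.
Variables (F : finFieldType) (R : realFieldType).
Local Notation gT := {'GL_2[F]}.
Local Notation G := (SL2 F).
Local Notation q := #|F|.
Local Notation N := #|G|.
Local Open Scope ring_scope.

Lemma bad_mass (f : gT -> R) :
  (forall x, f x = (x \in G)%:R / N%:R) ->
  \sum_(x : gT) (if ~~ good x then f x else 0) = #|[set x in G | ~~ good x]|%:R / N%:R.
Proof.
move=> hf.
transitivity (\sum_(x : gT) (if (x \in G) && ~~ good x then (N%:R^-1 : R) else 0)).
  apply: eq_bigr => x _; rewrite hf; case: (good x); rewrite ?andbF //=.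
  by case: (x \in G); rewrite ?mul1r ?mul0r.
rewrite -big_mkcond /= sumr_const [RHS]mulr_natl.
by congr (_ *+ _); apply: eq_card => x; rewrite inE.
Qed.

Lemma marg_bound (D : gT * gT -> R) :
  is_distr D -> marginals_uniform D ->
  1 - 2 * (#|[set x in G | ~~ good x]|%:R / N%:R) <=
  \sum_(p : gT * gT) (if good p.1 && good p.2 then D p else 0).
Proof.
move=> [D0 D1] [M1 M2].
set B := #|[set x in G | ~~ good x]|%:R / N%:R.
have e1 : \sum_(p : gT * gT) (if ~~ good p.1 then D p else 0) = B.
  transitivity (\sum_(x : gT) \sum_(y : gT) (if ~~ good x then D (x, y) else 0)).
    by rewrite pair_bigA; apply: eq_bigr => -[x y].
  rewrite /B -(bad_mass (f := fun x => \sum_y D (x, y))) //.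
  by apply: eq_bigr => x _; case: (good x); rewrite /= ?big1_eq.
have e2 : \sum_(p : gT * gT) (if ~~ good p.2 then D p else 0) = B.
  transitivity (\sum_(x : gT) \sum_(y : gT) (if ~~ good y then D (x, y) else 0)).
    by rewrite pair_bigA; apply: eq_bigr => -[x y].
  rewrite exchange_big /=.
  rewrite /B -(bad_mass (f := fun y => \sum_x D (x, y))) //.
  by apply: eq_bigr => y _; case: (good y); rewrite /= ?big1_eq.
have split1 : \sum_(p : gT * gT) (if good p.1 && good p.2 then D p else 0) =
   1 - \sum_(p : gT * gT) (if good p.1 && good p.2 then 0 else D p).
  rewrite -D1 -sumrB; apply: eq_bigr => p _; case: ifP => _; ring.
rewrite split1 lerD2l lerN2.
have -> : 2 * B = B + B by ring.
rewrite -[X in X + _]e1 -[X in _ + X]e2 -big_split /=.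
apply: ler_sum => p _.
case: (good p.1); case: (good p.2) => /=; rewrite ?add0r ?addr0 //.
by rewrite lerDl.
Qed.

End Marg.


End Part6.
Import Part6.

Unset Implicit Arguments.
Theorem mainTheorem18 :
  exists (C k : nat), (0 < C)%N /\ (0 < k)%N /\
  forall (F : finFieldType) (R : realFieldType) (D : {'GL_2[F]} * {'GL_2[F]} -> R),
    is_distr D -> marginals_uniform D ->
    (\sum_(p : {'GL_2[F]} * {'GL_2[F]} | [forall x in SL2 F,
                  probC R p.1 p.2 (x ^: SL2 F)%g <= C%:R / #|F|%:R]
               && (sdist_unif R p.1 p.2 ^+ k <= C%:R ^+ k / #|F|%:R))
       D p >= 1 - C%:R / #|F|%:R)%R.
Proof.
exists 100%N, 1%N; split => //; split => //.
move=> F R D Dd Dm.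
apply: (@le_trans _ _ (1 - 2 * (#|[set x in SL2 F | ~~ good x]|%:R / #|SL2 F|%:R))%R).
  rewrite lerD2l lerN2 mulrA -natrM.
  apply: ratio_le.
  have := card_bad F; have := card_G_lb F; have := q_ge2 F.
  move: #|[set x in SL2 F | _]| #|SL2 F| => b M.
  case: #|F| => [|[|m]] //= _ h1 h2; nia.
apply: le_trans (marg_bound Dd Dm) _.
rewrite [X in (_ <= X)%R]big_mkcond /=; apply: ler_sum => p _.
case: (boolP (good p.1 && good p.2)) => [/andP [g1 g2] | _].
  rewrite ifT //; apply/andP; split.
    by apply/forall_inP => x _; exact: probC_bound.
  by rewrite !expr1; exact: sdist_bound.
by case: ifP => _ //; case: Dd => D0 _; exact: D0.
Qed.
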